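(* Let $d\ge 2$, let $U$ be an arbitrary unitary on $\mathbb{C}^d$, and for $r\in[0,1]$ let $\mathcal{J}_r(\rho)=r\rho+(1-r)U\rho U^\dagger$. For any $r_1,r_2\in[0,1]$, a single-system probe is sufficient to distinguish $\mathcal{J}_{r_1}$ and $\mathcal{J}_{r_2}$ optimally: the maximum of the success probability over single-system probes equals its maximum over all probes, including entangled probes with an arbitrary ancilla.
   Context: Two channels $\mathcal{N}_1,\mathcal{N}_2$ on $\mathbb{C}^d$, chosen with equal priors $1/2$, are discriminated in a single shot. A single-system probe is a state $\rho$ on $\mathbb{C}^d$ with success probability $\frac12+\frac14\|\mathcal{N}_1(\rho)-\mathcal{N}_2(\rho)\|_1$; a general (possibly entangled) probe is a state $\rho_{AB}$ on $\mathbb{C}^d\otimes\mathbb{C}^{d'}$ (any finite $d'$) with the channel acting on $A$, with success probability $\frac12+\frac14\|(\mathcal{N}_1\otimes\mathrm{id})(\rho_{AB})-(\mathcal{N}_2\otimes\mathrm{id})(\rho_{AB})\|_1$; $\|\cdot\|_1$ is the trace norm. *)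

(* Defs.v *)
(* matrices over an abstract numClosedFieldType C
   (the field of complex numbers is an instance). *)
From HB Require Import structures.
From mathcomp Require Import all_boot all_order all_algebra.
From mathcomp Require Import sesquilinear spectral.
Set Implicit Arguments. Unset Strict Implicit. Unset Printing Implicit Defensive.
Import Order.TTheory GRing.Theory Num.Theory.
Local Open Scope ring_scope.
Local Open Scope sesquilinear_scope.

Section Defs.
Variable C : numClosedFieldType.

Definition adj m n (A : 'M[C]_(m, n)) : 'M[C]_(n, m) := A ^t*.

Definition is_state n (rho : 'M[C]_n) : Prop :=
  [/\ adj rho = rho,
      (forall v : 'rV[C]_n, 0 <= (v *m rho *m adj v) 0 0)
    & \tr rho = 1].

(* trace norm ||A||_1 = tr sqrt(A^dagger A) = sum of the square roots of the
   eigenvalues of the (normal, psd) matrix A^dagger A, i.e. sum of the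
   singular values of A. *)
Definition trnorm n (A : 'M[C]_n) : C :=
  \sum_(i < n) sqrtC (spectral_diag (adj A *m A) 0 i).

Definition Jch d (U : 'M[C]_d) (r : C) (X : 'M[C]_d) : 'M[C]_d :=
  r *: X + (1 - r) *: (U *m X *m adj U).

Lemma card_pair d d' : #|{: 'I_d * 'I_d'}| = (d * d')%N.
Proof. by rewrite card_prod !card_ord. Qed.

Definition enc d d' (i : 'I_d) (k : 'I_d') : 'I_(d * d') :=
  cast_ord (card_pair d d') (enum_rank (i, k)).
Definition dec d d' (a : 'I_(d * d')) : 'I_d * 'I_d' :=
  enum_val (cast_ord (esym (card_pair d d')) a).

(* (Phi (x) id)(X) for a map Phi on d x d matrices acting on system A,
   with ancilla B of dimension d': apply Phi to every d x d block
   X_{kl} = (<i,k| X |j,l>)_{i,j}. *)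
Definition tens_id d d' (Phi : 'M[C]_d -> 'M[C]_d) (X : 'M[C]_(d * d'))
  : 'M[C]_(d * d') :=
  \matrix_(a, b)
    Phi (\matrix_(i, j) X (enc i (dec a).2) (enc j (dec b).2)) (dec a).1 (dec b).1.

(* success probabilities for discriminating N1, N2 with equal priors *)
Definition psucc_single d (N1 N2 : 'M[C]_d -> 'M[C]_d) (rho : 'M[C]_d) : C :=
  2^-1 + 4^-1 * trnorm (N1 rho - N2 rho).

Definition psucc_ent d d' (N1 N2 : 'M[C]_d -> 'M[C]_d) (rho : 'M[C]_(d * d')) : C :=
  2^-1 + 4^-1 * trnorm (tens_id N1 rho - tens_id N2 rho).

End Defs.

(* Main.v *)
Require Import Defs.
From HB Require Import structures.
From mathcomp Require Import all_boot all_order all_algebra.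
From mathcomp Require Import sesquilinear spectral.
From mathcomp Require Import ring lra.
From Stdlib Require Import Classical.
Set Implicit Arguments. Unset Strict Implicit. Unset Printing Implicit Defensive.
Import Order.TTheory GRing.Theory Num.Theory.
Local Open Scope ring_scope.
Local Open Scope sesquilinear_scope.


Section Geo.
Variable R : realFieldType.
Variable n : nat.
Variables x y : 'I_n -> R.

Definition Sm (f p : 'I_n -> R) := \sum_i p i * f i.
Definition Nm p := Sm x p ^+ 2 + Sm y p ^+ 2.
Definition simplex (p : 'I_n -> R) := (forall i, 0 <= p i) /\ \sum_i p i = 1.
Definition supp (p : 'I_n -> R) := [set i | p i != 0].

Lemma sum_e (F : 'I_n -> R) i : \sum_m (m == i)%:R * F m = F i.
Proof.
rewrite (bigD1 i) //= eqxx mul1r big1 ?addr0 // => m /negPf ->; by rewrite mul0r.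
Qed.

Definition e3 (a b c : R) i j l : 'I_n -> R :=
  fun m => a * (m == i)%:R + b * (m == j)%:R + c * (m == l)%:R.

Lemma Sm_e3 f a b c i j l : Sm f (e3 a b c i j l) = a * f i + b * f j + c * f l.
Proof.
rewrite /Sm /e3.
under eq_bigr => m _ do rewrite !mulrDl -!mulrA.
by rewrite !big_split /= -!mulr_sumr !sum_e.
Qed.

Lemma sum_e3 a b c i j l : \sum_m e3 a b c i j l m = a + b + c.
Proof.
have := Sm_e3 (fun _ => 1) a b c i j l; rewrite /Sm !mulr1.
by under eq_bigr => m _ do rewrite mulr1.
Qed.

Lemma Sm_add f p q (t : R) : Sm f (fun m => p m + t * q m) = Sm f p + t * Sm f q.
Proof.
rewrite /Sm mulr_sumr -big_split /=; apply: eq_bigr => m _; by rewrite mulrDl mulrA.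
Qed.

Lemma Nm_ge0 p : 0 <= Nm p.
Proof. rewrite /Nm; nra. Qed.

Lemma hit (p d : 'I_n -> R) (m0 : 'I_n) : (forall i, 0 <= p i) -> d m0 < 0 ->
  exists t m, [/\ 0 <= t, d m < 0, p m + t * d m = 0 & forall i, 0 <= p i + t * d i].
Proof.
move=> p0 dm0.
case: (@arg_minP _ _ _ m0 (fun m => d m < 0) (fun m => p m / - d m) dm0).
move=> m dm minm.
exists (p m / - d m), m; split => //.
- by rewrite divr_ge0 // oppr_ge0 ltW.
- by rewrite invrN mulrN mulNr -mulrA mulVf ?mulr1 ?subrr // lt_eqF.
move=> i; case: (ltP (d i) 0) => di.
  have := minm i di; rewrite ler_pdivlMr ?oppr_gt0 // mulrN.
  set a := p m / - d m; lra.
by apply: addr_ge0 => //; apply: mulr_ge0 => //; rewrite divr_ge0 // oppr_ge0 ltW.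
Qed.


Lemma Nm_line p d s : Sm x p * Sm y d = Sm y p * Sm x d ->
  Nm p * Nm (fun k => p k + s * d k) =
  (Nm p + s * (Sm x p * Sm x d + Sm y p * Sm y d)) ^+ 2.
Proof.
rewrite /Nm !Sm_add; set X := Sm x p; set Y := Sm y p; set DX := Sm x d; set DY := Sm y d.
move=> h; have e : X * DY - Y * DX = 0 by rewrite h subrr.
transitivity ((X ^+ 2 + Y ^+ 2 + s * (X * DX + Y * DY)) ^+ 2 + s ^+ 2 * (X * DY - Y * DX) ^+ 2).
  ring.
by rewrite e; ring.
Qed.

Lemma e3_supp a b c i j l k : e3 a b c i j l k != 0 -> k \in [:: i; j; l].
Proof.
rewrite /e3 !inE; case: (k == i); case: (k == j); case: (k == l) => //=.
by rewrite !mulr0 !addr0 eqxx.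
Qed.

Lemma step p i j l a b c :
  simplex p -> i \in supp p -> j \in supp p -> l \in supp p ->
  i != j -> i != l -> j != l -> a + b + c = 0 -> ~ (a = 0 /\ b = 0 /\ c = 0) ->
  Sm x p * Sm y (e3 a b c i j l) = Sm y p * Sm x (e3 a b c i j l) ->
  Sm x p * Sm x (e3 a b c i j l) + Sm y p * Sm y (e3 a b c i j l) <= 0 ->
  0 < Nm p ->
  (exists p0, simplex p0 /\ Nm p0 = 0) \/
  exists p', [/\ simplex p', (#|supp p'| < #|supp p|)%N & Nm p' <= Nm p].
Proof.
move=> [p0 p1] iA jA lA ij il jl sum0 nz par rle Npos.
set d := e3 a b c i j l.
have di : d i = a.
  by rewrite /d /e3 eqxx (negPf ij) (negPf il) !mulr0 mulr1 !addr0.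
have dj : d j = b.
  by rewrite /d /e3 eqxx eq_sym (negPf ij) (negPf jl) !mulr0 mulr1 add0r addr0.
have dl : d l = c.
  by rewrite /d /e3 eqxx eq_sym (negPf il) eq_sym (negPf jl) !mulr0 mulr1 !add0r.
have [m0 dm0] : exists m0, d m0 < 0.
  case: (ltP a 0) => ha; first by exists i; rewrite di.
  case: (ltP b 0) => hb; first by exists j; rewrite dj.
  case: (ltP c 0) => hc; first by exists l; rewrite dl.
  exfalso; apply: nz; split; first lra. split; lra.
have [t [m [t0 dm pm pos]]] := hit p0 dm0.
have dsupp : forall k, d k != 0 -> k \in supp p.
  move=> k /e3_supp; rewrite !in_cons in_nil orbF => /orP[/eqP->|/orP[/eqP->|/eqP->]] //.
have mA : m \in supp p by apply: dsupp; rewrite lt_eqF.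
set r := Sm x p * Sm x d + Sm y p * Sm y d.
have sumd : \sum_k d k = 0 by rewrite /d sum_e3.
have simp s : 0 <= s -> (forall k, 0 <= p k + s * d k) -> simplex (fun k => p k + s * d k).
  move=> s0 h; split => //; by rewrite big_split /= -mulr_sumr sumd mulr0 addr0.
have line := fun s => Nm_line s par.
rewrite -/r in line.
case: (leP 0 (Nm p + t * r)) => htr.
  right; exists (fun k => p k + t * d k); split.
  - exact: simp.
  - have sub : supp (fun k => p k + t * d k) \subset supp p :\ m.
      apply/subsetP => k; rewrite !inE => hk; apply/andP; split.
        by apply: contraNneq hk => ->; rewrite pm.
      apply/negP => /eqP pk0; move: hk; rewrite pk0 add0r mulf_eq0 negb_or => /andP[_ dk].
      by move: (dsupp k dk); rewrite inE pk0 eqxx.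
    have := subset_leq_card sub; rewrite (cardsD1 m (supp p)) mA add1n.
    by move/leq_ltn_trans; apply.
  - pose q := fun k => p k + t * d k.
    have e : Nm p * Nm q = (Nm p + t * r) ^+ 2 := line t.
    change (Nm q <= Nm p).
    have hr : t * r <= 0 by rewrite mulr_ge0_le0.
    have h1 : Nm p * Nm q <= Nm p * Nm p.
      rewrite e; set u := Nm p + t * r; have : u <= Nm p by rewrite /u; lra.
      move=> hu; rewrite expr2; apply: ler_pM => //.
    by rewrite ler_pM2l in h1.
left; have r0 : r < 0.
  case: (ltP r 0) => // hr; have : 0 <= t * r by rewrite mulr_ge0. lra.
have t0p : 0 <= - Nm p / r.
  by apply: mulr_le0; [rewrite oppr_le0 ltW | rewrite invr_le0 ltW].
exists (fun k => p k + (- Nm p / r) * d k); split.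
  apply: simp => // k; case: (leP 0 (d k)) => dk.
    by rewrite addr_ge0 // mulr_ge0.
  have tt : - Nm p / r <= t by rewrite ler_ndivrMr // ; lra.
  have := pos k; nra.
have := line (- Nm p / r).
rewrite mulrAC -mulrA mulfV ?lt_eqF // mulr1 subrr expr0n /= => /eqP.
by rewrite mulf_eq0 gt_eqF //= => /eqP.
Qed.

Definition bet p m := Sm x p * y m - Sm y p * x m.

Lemma step2 p i j l a b c :
  simplex p -> i \in supp p -> j \in supp p -> l \in supp p ->
  i != j -> i != l -> j != l -> a + b + c = 0 -> ~ (a = 0 /\ b = 0 /\ c = 0) ->
  a * bet p i + b * bet p j + c * bet p l = 0 ->
  0 < Nm p ->
  (exists p0, simplex p0 /\ Nm p0 = 0) \/
  exists p', [/\ simplex p', (#|supp p'| < #|supp p|)%N & Nm p' <= Nm p].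
Proof.
move=> sp iA jA lA ij il jl s0 nz hb Np.
have par : forall a b c, a * bet p i + b * bet p j + c * bet p l = 0 ->
   Sm x p * Sm y (e3 a b c i j l) = Sm y p * Sm x (e3 a b c i j l).
  move=> a' b' c' h; rewrite !Sm_e3; apply/eqP; rewrite -subr_eq0 -h /bet; apply/eqP; ring.
case: (leP (Sm x p * Sm x (e3 a b c i j l) + Sm y p * Sm y (e3 a b c i j l)) 0) => hr.
  exact: (step sp iA jA lA ij il jl s0 nz (par a b c hb) hr Np).
apply: (@step _ i j l (-a) (-b) (-c)) => //.
- by rewrite -!opprD s0 oppr0.
- move=> [/eqP ha [/eqP hb' /eqP hc]]; apply: nz; move: ha hb' hc; rewrite !oppr_eq0.
  by move=> /eqP -> /eqP -> /eqP ->.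
- by apply: (par (-a) (-b) (-c)); rewrite !mulNr -!opprD hb oppr0.
- move: hr; rewrite !Sm_e3 => hr.
  have -> : Sm x p * (- a * x i + - b * x j + - c * x l) + Sm y p * (- a * y i + - b * y j + - c * y l)
     = - (Sm x p * (a * x i + b * x j + c * x l) + Sm y p * (a * y i + b * y j + c * y l)) by ring.
  by rewrite oppr_le0 ltW.
Qed.

Lemma reduce k p : simplex p -> (#|supp p| <= k)%N ->
  (exists p0, simplex p0 /\ Nm p0 = 0) \/
  exists p', [/\ simplex p', (#|supp p'| <= 2)%N & Nm p' <= Nm p].
Proof.
elim: k p => [|k IH] p sp hk.
  by right; exists p; split => //; apply: leq_trans hk _.
case: (leqP #|supp p| 2) => h2; first by right; exists p.
case: (eqVneq (Nm p) 0) => N0; first by left; exists p.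
have Np : 0 < Nm p by rewrite lt_def N0 Nm_ge0.
have [i iA] : exists i, i \in supp p by apply/card_gt0P; apply: leq_trans h2.
have h2' := h2; rewrite (cardsD1 i) iA add1n ltnS in h2'.
have [j jA'] : exists j, j \in supp p :\ i by apply/card_gt0P; apply: leq_trans h2'.
rewrite (cardsD1 j) jA' add1n ltnS in h2'.
have [l lA''] : exists l, l \in supp p :\ i :\ j by apply/card_gt0P.
move: jA' lA''; rewrite !in_setD1 => /andP[ji jA] /andP[lj /andP[li lA]].
have ij : i != j by rewrite eq_sym.
have il : i != l by rewrite eq_sym.
have jl : j != l by rewrite eq_sym.
have res : (exists p0, simplex p0 /\ Nm p0 = 0) \/
  exists p', [/\ simplex p', (#|supp p'| < #|supp p|)%N & Nm p' <= Nm p].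
  case: (eqVneq (bet p l - bet p j) 0) => e1; last first.
    apply: (@step2 _ i j l (bet p l - bet p j) (bet p i - bet p l) (bet p j - bet p i)) => //.
    - by ring.
    - by move=> [/eqP h _]; rewrite h in e1.
    - by ring.
  case: (eqVneq (bet p i - bet p l) 0) => e2; last first.
    apply: (@step2 _ i j l (bet p l - bet p j) (bet p i - bet p l) (bet p j - bet p i)) => //.
    - by ring.
    - by move=> [_ [/eqP h _]]; rewrite h in e2.
    - by ring.
  apply: (@step2 _ i j l 1 (-1) 0) => //.
  - by rewrite addr0 subrr.
  - by move=> [/eqP]; rewrite oner_eq0.
  - move/eqP: e1; move/eqP: e2; rewrite !subr_eq0 => /eqP e2 /eqP e1.
    by rewrite mul1r mulN1r mul0r addr0 e2 e1 subrr.
case: res => [|[p' [sp' hs hN]]]; first by left.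
case: (IH p' sp') => [|//|[p'' [sp'' hs'' hN'']]].
  by rewrite -ltnS; apply: leq_trans hs hk.
by left.
by right; exists p''; split => //; apply: le_trans hN'' hN.
Qed.

Definition sstar i j : R :=
  let wx := x i - x j in let wy := y i - y j in
  let W := wx ^+ 2 + wy ^+ 2 in let B := x j * wx + y j * wy in
  if W == 0 then 1 else
  let s0 := - B / W in if s0 < 0 then 0 else if 1 < s0 then 1 else s0.

Lemma sstar01 i j : 0 <= sstar i j <= 1.
Proof.
rewrite /sstar; case: ifP => _; first by rewrite ler01 lexx.
case: ifP => h; first by rewrite lexx ler01.
case: ifP => h'; first by rewrite lexx ler01.
by apply/andP; split; rewrite leNgt ?h ?h'.
Qed.

Lemma seg i j s : 0 <= s <= 1 ->
  (sstar i j * x i + (1 - sstar i j) * x j) ^+ 2 + (sstar i j * y i + (1 - sstar i j) * y j) ^+ 2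
  <= (s * x i + (1 - s) * x j) ^+ 2 + (s * y i + (1 - s) * y j) ^+ 2.
Proof.
move=> /andP[s0 s1].
set wx := x i - x j; set wy := y i - y j.
set W := wx ^+ 2 + wy ^+ 2; set B := x j * wx + y j * wy.
have id u v : (v * x i + (1 - v) * x j) ^+ 2 + (v * y i + (1 - v) * y j) ^+ 2
   - ((u * x i + (1 - u) * x j) ^+ 2 + (u * y i + (1 - u) * y j) ^+ 2)
   = (v - u) * (2 * B + (v + u) * W).
  by rewrite /B /W /wx /wy; ring.
rewrite -subr_ge0 id.
have W0 : 0 <= W by rewrite /W; nra.
rewrite /sstar -/wx -/wy -/W -/B.
case: eqP => [Wz|/eqP Wnz].
  have wx0 : wx = 0.
    apply/eqP; rewrite -sqrf_eq0; apply/eqP.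
    have : wx ^+ 2 <= 0 by rewrite -Wz /W lerDl sqr_ge0.
    by move=> h; apply/le_anti; rewrite h sqr_ge0.
  have wy0 : wy = 0.
    apply/eqP; rewrite -sqrf_eq0; apply/eqP.
    have : wy ^+ 2 <= 0 by rewrite -Wz /W lerDr sqr_ge0.
    by move=> h; apply/le_anti; rewrite h sqr_ge0.
  by rewrite Wz /B wx0 wy0 !(mulr0, addr0).
have Wp : 0 < W by rewrite lt_def Wnz W0.
set s0' := - B / W.
have hB : B = - (s0' * W) by rewrite /s0' mulfVK // opprK.
case: ltP => h1.
  have hw : s0' * W < 0 by rewrite pmulr_llt0.
  rewrite subr0; apply: mulr_ge0 => //; rewrite hB.
  have : 0 <= s * W by rewrite mulr_ge0 // ltW.
  lra.
case: ltP => h2.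
  rewrite hB.
  have -> : (s - 1) * (2 * - (s0' * W) + (s + 1) * W) = (1 - s) * ((2 * s0' - s - 1) * W) by ring.
  apply: mulr_ge0; first by rewrite subr_ge0.
  by apply: mulr_ge0; [lra | exact: ltW].
rewrite hB.
have -> : (s - s0') * (2 * - (s0' * W) + (s + s0') * W) = W * (s - s0') ^+ 2 by ring.
by rewrite mulr_ge0 // sqr_ge0.
Qed.

Definition cand i j : 'I_n -> R := e3 (sstar i j) (1 - sstar i j) 0 i j i.

Lemma cand_simplex i j : simplex (cand i j).
Proof.
have /andP[h0 h1] := sstar01 i j.
split; last by rewrite /cand sum_e3 addr0 addrC subrK.
move=> m; rewrite /cand /e3 mul0r addr0.
by rewrite addr_ge0 // mulr_ge0 // ?ler0n // subr_ge0.
Qed.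

Lemma Sm_cand f i j : Sm f (cand i j) = sstar i j * f i + (1 - sstar i j) * f j.
Proof. by rewrite /cand Sm_e3 mul0r addr0. Qed.

Lemma two p : simplex p -> (#|supp p| <= 2)%N ->
  exists i j s, 0 <= s <= 1 /\ forall f, Sm f p = s * f i + (1 - s) * f j.
Proof.
move=> [p0 p1] h2.
have [i iA] : exists i, i \in supp p.
  apply/card_gt0P; rewrite lt0n; apply/negP => /eqP /cards0_eq e.
  have : \sum_m p m = 0.
    apply: big1 => m _; apply/eqP; apply/negPn; apply/negP => hm.
    have : m \in supp p by rewrite inE.
    by rewrite e inE.
  by rewrite p1 => /eqP; rewrite oner_eq0.
have Sf : forall f, Sm f p = p i * f i + \sum_(m | m != i) p m * f m.
  by move=> f; rewrite /Sm (bigD1 i).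
case: (eqVneq #|supp p :\ i| 0) => [/cards0_eq e | ne].
  have z : forall m, m != i -> p m = 0.
    move=> m mi; apply/eqP; apply/negPn/negP => hm.
    have : m \in supp p :\ i by rewrite in_setD1 mi inE.
    by rewrite e inE.
  have pi1 : p i = 1.
    by rewrite -p1 (bigD1 i) //= big1 ?addr0 // => m /z.
  exists i, i, 1; split; first by rewrite lexx ler01.
  move=> f; rewrite Sf big1 ?addr0; last by move=> m /z ->; rewrite mul0r.
  by rewrite pi1 subrr mul0r addr0.
have [j jA'] : exists j, j \in supp p :\ i by apply/card_gt0P; rewrite lt0n.
have : #|supp p :\ i :\ j| = 0%N.
  move: h2; rewrite (cardsD1 i) iA (cardsD1 j (supp p :\ i)) jA'.
  by case: #|_|.
move=> /cards0_eq e.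
move: jA'; rewrite in_setD1 => /andP[ji jA].
have z : forall m, m != i -> m != j -> p m = 0.
  move=> m mi mj; apply/eqP; apply/negPn/negP => hm.
  have : m \in supp p :\ i :\ j by rewrite !in_setD1 mi mj inE.
  by rewrite e inE.
have Sf2 : forall f, Sm f p = p i * f i + p j * f j.
  move=> f; rewrite Sf (bigD1 j) //= big1 ?addr0 // => m /andP[mi mj].
  by rewrite z // mul0r.
have pij : p i + p j = 1.
  by have := Sf2 (fun _ => 1); rewrite /Sm !mulr1 => <-; under eq_bigr do rewrite mulr1.
exists i, j, (p i); split.
  by rewrite p0 /= -pij lerDl p0.
by move=> f; rewrite Sf2 -pij addrAC subrr add0r.
Qed.

Lemma geo : (0 < n)%N -> exists p, simplex p /\ forall q, simplex q -> Nm p <= Nm q.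
Proof.
move=> n0.
case: (classic (exists p0, simplex p0 /\ Nm p0 = 0)) => [[p0 [s0 N0]]|nz].
  by exists p0; split => // q _; rewrite N0 Nm_ge0.
pose i0 := Ordinal n0.
pose F := fun ij : 'I_n * 'I_n => Nm (cand ij.1 ij.2).
case: (@arg_minP _ _ _ (i0, i0) xpredT F isT) => b _ hb.
exists (cand b.1 b.2); split; first exact: cand_simplex.
move=> q sq; case: (reduce sq (leqnn _)) => [//|[p' [sp' h2 hN]]].
have [i [j [s [s01 hf]]]] := two sp' h2.
apply: le_trans hN.
apply: le_trans (hb (i, j) isT) _.
by rewrite /F /Nm /= !Sm_cand !hf; apply: seg.
Qed.

End Geo.


Section M1.
Variable C : numClosedFieldType.

Lemma unitary_mulKV n (U : 'M[C]_n) : U \is unitarymx -> U^t* *m U = 1%:M.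
Proof.
move=> Uu; rewrite -invmx_unitary // mulVmx //; exact: unitarymx_unit.
Qed.

Lemma unitary_mulK n (U : 'M[C]_n) : U \is unitarymx -> U *m U^t* = 1%:M.
Proof. by move/unitarymxP. Qed.

Lemma char_poly_conj n (P D : 'M[C]_n) : P \in unitmx ->
  char_poly (invmx P *m D *m P) = char_poly D.
Proof.
move=> Pu; rewrite /char_poly /char_poly_mx.
have e1 : map_mx polyC (invmx P) *m map_mx polyC P = 1%:M.
  by rewrite -map_mxM mulVmx // map_mx1.
rewrite !map_mxM.
set iP := map_mx polyC (invmx P); set P' := map_mx polyC P; set D' := map_mx polyC D.
have -> : 'X%:M - iP *m D' *m P' = iP *m ('X%:M - D') *m P'.
  rewrite mulmxBr mulmxBl; congr (_ - _).
  by rewrite mul_mx_scalar -scalemxAl e1 scalemx1.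
have e2 : P' *m iP = 1%:M by rewrite -map_mxM mulmxV // map_mx1.
by rewrite !det_mulmx mulrC mulrA -det_mulmx e2 det1 mul1r.
Qed.

Lemma char_poly_diag n (a : 'rV[C]_n) :
  char_poly (diag_mx a) = \prod_(x <- [seq a 0 i | i <- enum 'I_n]) ('X - x%:P).
Proof.
rewrite char_poly_trig ?diag_mx_is_trig // big_map big_enum /=.
by apply: eq_bigr => i _; rewrite mxE eqxx mulr1n.
Qed.

Lemma spec_sum n (A : 'M[C]_n) (P : 'M[C]_n) (a : 'rV[C]_n) (f : C -> C) :
  A \is normalmx -> P \in unitmx -> A = invmx P *m diag_mx a *m P ->
  \sum_i f (spectral_diag A 0 i) = \sum_i f (a 0 i).
Proof.
move=> An Pu eA.
have eB := orthomx_spectralP An.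
have e : \prod_(x <- [seq spectral_diag A 0 i | i <- enum 'I_n]) ('X - x%:P)
        = \prod_(x <- [seq a 0 i | i <- enum 'I_n]) ('X - x%:P).
  rewrite -!char_poly_diag -(char_poly_conj _ (spectral_unit A)) -eB.
  by rewrite -(char_poly_conj _ Pu) -eA.
have pe := prod_XsubC_eq e.
have := perm_big _ pe (op := +%R) (x := 0) (F := f) (P := xpredT).
by rewrite !big_map -!enumT !big_enum.
Qed.


Lemma herm_normal n (A : 'M[C]_n) : A^t* = A -> A \is normalmx.
Proof. by move=> h; apply/normalmxP; rewrite h. Qed.

Lemma adjM_herm m n (X : 'M[C]_(m, n)) : (X^t* *m X)^t* = X^t* *m X.
Proof. by rewrite trmx_mul map_mxM trmxCK. Qed.

Lemma trnorm_spec n (X W : 'M[C]_n) (a : 'rV[C]_n) : W \is unitarymx ->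
  adj X *m X = W^t* *m diag_mx a *m W -> trnorm X = \sum_i sqrtC (a 0 i).
Proof.
move=> Wu e; rewrite /trnorm; apply: (spec_sum _ (P := W)).
- by apply: herm_normal; rewrite /adj adjM_herm.
- exact: unitarymx_unit.
- by rewrite invmx_unitary.
Qed.

Lemma herm_spec n (Y : 'M[C]_n) : Y^t* = Y ->
  exists W (y : 'rV[C]_n), [/\ W \is unitarymx, (forall i, y 0 i \is Num.real) &
     Y = W^t* *m diag_mx y *m W].
Proof.
move=> h.
have hY : Y \is hermsymmx by apply/is_hermitianmxP; rewrite expr0 scale1r h.
exists (spectralmx Y), (spectral_diag Y); split.
- exact: spectral_unitarymx.
- by move=> i; have /mxOverP := hermitian_spectral_diag_real hY; apply.
- rewrite -invmx_unitary ?spectral_unitarymx //.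
  by apply/orthomx_spectralP; apply: hermitian_normalmx.
Qed.

Lemma tsZ m n (c : C) (A : 'M[C]_(m, n)) : (c *: A)^t* = c^* *: A^t*.
Proof. by apply/matrixP => i j; rewrite !mxE rmorphM. Qed.

Lemma conj_mul n (W A B : 'M[C]_n) : W \is unitarymx ->
  (W^t* *m A *m W) *m (W^t* *m B *m W) = W^t* *m (A *m B) *m W.
Proof.
by move=> Wu; rewrite !mulmxA -[W^t* *m A *m W *m W^t*]mulmxA unitary_mulK // mulmx1.
Qed.

Lemma trnorm_herm n (Y W : 'M[C]_n) (y : 'rV[C]_n) (c : C) :
  W \is unitarymx -> (forall i, y 0 i \is Num.real) ->
  Y = W^t* *m diag_mx y *m W ->
  trnorm (c *: Y) = `|c| * \sum_i `|y 0 i|.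
Proof.
move=> Wu yr eY.
have hY : Y^t* = Y.
  rewrite eY !trmx_mul !map_mxM trmxCK tr_diag_mx map_diag_mx mulmxA.
  congr (_ *m _ *m _); congr diag_mx; apply/rowP => i; rewrite !mxE.
  by apply/CrealP.
rewrite (@trnorm_spec _ _ W (\row_i (`|c * y 0 i| ^+ 2))) //.
  by rewrite mulr_sumr; apply: eq_bigr => i _; rewrite mxE sqrCK // normrM.
rewrite /adj tsZ hY -scalemxAl -scalemxAr scalerA {1 2}eY conj_mul // mulmx_diag.
rewrite scalemxAl scalemxAr; congr (_ *m _ *m _).
apply/matrixP => i j; rewrite !mxE.
case: eqP => [->|_]; last by rewrite !mulr0n mulr0.
rewrite !mulr1n normrM exprMn (real_normK (yr j)) normCKC; ring.
Qed.

End M1.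


Section RC.
Variable C : numClosedFieldType.
Definition Rc := {x : C | x \is Num.real}.
HB.instance Definition _ := [isSub for (@sval C _) : Rc -> C].
HB.instance Definition _ := [Choice of Rc by <:].
HB.instance Definition _ := [SubChoice_isSubIntegralDomain of Rc by <:].
HB.instance Definition _ := [SubIntegralDomain_isSubField of Rc by <:].
Definition Rc_le (x y : Rc) := (val x <= val y).
Definition Rc_lt (x y : Rc) := (val x < val y).
Definition Rc_norm (x : Rc) : Rc := Sub `|val x| (normr_real _).
Lemma Rc_le0_add x y : Rc_le 0 x -> Rc_le 0 y -> Rc_le 0 (x + y).
Proof. rewrite /Rc_le /= ; exact: addr_ge0. Qed.
Lemma Rc_le0_mul x y : Rc_le 0 x -> Rc_le 0 y -> Rc_le 0 (x * y).
Proof. rewrite /Rc_le /= ; exact: mulr_ge0. Qed.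
Lemma Rc_le0_anti x : Rc_le 0 x -> Rc_le x 0 -> x = 0.
Proof. by rewrite /Rc_le => a b; apply: val_inj; apply/eqP; rewrite eq_le a b. Qed.
Lemma Rc_sub_ge0 x y : Rc_le 0 (y - x) = Rc_le x y.
Proof. by rewrite /Rc_le /= subr_ge0. Qed.
Lemma Rc_le0_total x : Rc_le 0 x || Rc_le x 0.
Proof. by rewrite /Rc_le /=; case: x => x /= ; rewrite realE. Qed.
Lemma Rc_normN x : Rc_norm (- x) = Rc_norm x.
Proof. by apply: val_inj; rewrite /= normrN. Qed.
Lemma Rc_ge0_norm x : Rc_le 0 x -> Rc_norm x = x.
Proof. by rewrite /Rc_le => h; apply: val_inj; rewrite /= ger0_norm. Qed.
Lemma Rc_lt_def x y : Rc_lt x y = (y != x) && Rc_le x y.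
Proof. by rewrite /Rc_lt /Rc_le lt_def. Qed.
HB.instance Definition _ := Num.IntegralDomain_isLeReal.Build Rc
  Rc_le0_add Rc_le0_mul Rc_le0_anti Rc_sub_ge0 Rc_le0_total Rc_normN Rc_ge0_norm Rc_lt_def.

Lemma val_le (x y : Rc) : (val x <= val y) = (x <= y). Proof. by []. Qed.
Lemma valM (x y : Rc) : val (x * y) = val x * val y. Proof. by []. Qed.
Lemma valD (x y : Rc) : val (x + y) = val x + val y. Proof. by []. Qed.
Lemma val_sum (I : finType) (F : I -> Rc) : val (\sum_i F i) = \sum_i val (F i).
Proof. exact: rmorph_sum. Qed.
Definition toRc (x : C) : Rc := Sub ('Re x) (Creal_Re x).
Lemma val_toRc x : val (toRc x) = 'Re x. Proof. by []. Qed.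
Definition toRcI (x : C) : Rc := Sub ('Im x) (Creal_Im x).
Definition mkRc (x : C) (h : x \is Num.real) : Rc := Sub x h.
End RC.

Section Realize.
Variable C : numClosedFieldType.

Lemma tsM m n p (A : 'M[C]_(m, n)) (B : 'M[C]_(n, p)) : (A *m B)^t* = B^t* *m A^t*.
Proof. by rewrite trmx_mul map_mxM. Qed.

Lemma quad_form n (psi : 'rV[C]_n) (W : 'M[C]_n) (lam : 'rV[C]_n) :
  (psi *m (W^t* *m diag_mx lam *m W) *m psi^t*) 0 0
  = \sum_i `|(psi *m W^t*) 0 i| ^+ 2 * lam 0 i.
Proof.
have e : psi *m (W^t* *m diag_mx lam *m W) *m psi^t*
       = (psi *m W^t*) *m diag_mx lam *m (psi *m W^t*)^t*.
  by rewrite tsM trmxCK !mulmxA.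
rewrite e mul_mx_diag !mxE; apply: eq_bigr => i _; rewrite !mxE normCK; ring.
Qed.

Lemma row_norm n (c : 'rV[C]_n) : (c *m c^t*) 0 0 = \sum_i `|c 0 i| ^+ 2.
Proof. by rewrite !mxE; apply: eq_bigr => i _; rewrite !mxE normCK. Qed.

Lemma Re_real_mul (q z : C) : q \is Num.real -> 'Re (q * z) = q * 'Re z.
Proof. by move=> qr; rewrite (ReMl qr). Qed.

Lemma Im_real_mul (q z : C) : q \is Num.real -> 'Im (q * z) = q * 'Im z.
Proof. by move=> qr; rewrite (ImMl qr). Qed.

Lemma unitary_normal n (U : 'M[C]_n) : U \is unitarymx -> U \is normalmx.
Proof. by move=> Uu; apply/normalmxP; rewrite unitary_mulK // unitary_mulKV. Qed.

Lemma Nm_val n (lam : 'rV[C]_n) (q : 'I_n -> Rc C) :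
  `|\sum_i val (q i) * lam 0 i| ^+ 2 =
  val (Nm (fun i => toRc (lam 0 i)) (fun i => toRcI (lam 0 i)) q).
Proof.
rewrite normC2_Re_Im /Nm /Sm !rmorphD !rmorphXn /= !val_sum !raddf_sum /=.
congr (_ ^+ 2 + _ ^+ 2); apply: eq_bigr => i _.
  by rewrite (ReMl (valP (q i))).
by rewrite (ImMl (valP (q i))).
Qed.

Lemma realize d (U : 'M[C]_d) : (0 < d)%N -> U \is unitarymx ->
  exists psi0 : 'rV[C]_d, (psi0 *m psi0^t*) 0 0 = 1 /\
   forall (K : finType) (psi : K -> 'rV[C]_d), \sum_k (psi k *m (psi k)^t*) 0 0 = 1 ->
     `|(psi0 *m U *m psi0^t*) 0 0| ^+ 2 <= `|\sum_k (psi k *m U *m (psi k)^t*) 0 0| ^+ 2.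
Proof.
move=> d0 Uu.
have Wu := spectral_unitarymx U.
set W := spectralmx U in Wu *; set lam := spectral_diag U.
have eU : U = W^t* *m diag_mx lam *m W.
  by rewrite -invmx_unitary //; apply/orthomx_spectralP; apply: unitary_normal.
pose x := fun i => toRc (lam 0 i); pose y := fun i => toRcI (lam 0 i).
have [p [[p0 p1] pmin]] := geo x y d0.
pose c := \row_i sqrtC (val (p i)).
have WWt : W *m W^t* = 1%:M by rewrite unitary_mulK.
have cW : c *m W *m W^t* = c by rewrite -mulmxA WWt mulmx1.
exists (c *m W); split.
  rewrite tsM !mulmxA cW row_norm -[1]/(val (1 : Rc C)) -p1 val_sum.
  apply: eq_bigr => i _; rewrite mxE ger0_norm ?sqrtC_ge0 ?sqrtCK //.
  by rewrite (val_le 0 (p i)).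
move=> K psi hpsi.
rewrite eU quad_form cW.
have -> : \sum_i `|c 0 i| ^+ 2 * lam 0 i = \sum_i val (p i) * lam 0 i.
  apply: eq_bigr => i _; rewrite mxE ger0_norm ?sqrtC_ge0 ?sqrtCK //.
  by rewrite (val_le 0 (p i)).
rewrite Nm_val.
have qr : forall i, \sum_k `|(psi k *m W^t*) 0 i| ^+ 2 \is Num.real.
  by move=> i; apply: ger0_real; apply: sumr_ge0 => k _; rewrite exprn_ge0.
pose q := fun i => mkRc (qr i).
have -> : \sum_k (psi k *m (W^t* *m diag_mx lam *m W) *m (psi k)^t*) 0 0
        = \sum_i val (q i) * lam 0 i.
  under eq_bigr => k _ do rewrite quad_form.
  rewrite exchange_big /=; apply: eq_bigr => i _; by rewrite mulr_suml.
rewrite Nm_val val_le; apply: pmin; split.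
  by move=> i; rewrite -val_le /=; apply: sumr_ge0 => k _; rewrite exprn_ge0.
apply: val_inj; rewrite val_sum /= exchange_big /= -hpsi; apply: eq_bigr => k _.
rewrite -row_norm tsM trmxCK !mulmxA -[psi k *m W^t* *m W]mulmxA unitary_mulKV //.
by rewrite mulmx1.
Qed.

End Realize.


Lemma PLreal (R : realFieldType) (A A' B B' al : R) :
  0 <= al -> A ^+ 2 + A' ^+ 2 = 1 -> B ^+ 2 + B' ^+ 2 = 1 ->
  al <= A * B + A' * B' -> (A ^+ 2 - B ^+ 2) ^+ 2 <= 1 - al ^+ 2.
Proof.
move=> al0 hA hB hal.
have eA : A ^+ 2 - B ^+ 2 = (A * B' - A' * B) * (A * B' + A' * B).
  transitivity (A ^+ 2 * (B ^+ 2 + B' ^+ 2) - B ^+ 2 * (A ^+ 2 + A' ^+ 2)).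
    by rewrite hA hB !mulr1.
  ring.
have e1 : (A * B + A' * B') ^+ 2 + (A * B' - A' * B) ^+ 2 = 1.
  transitivity ((A ^+ 2 + A' ^+ 2) * (B ^+ 2 + B' ^+ 2)); first ring.
  by rewrite hA hB mulr1.
have e2 : (A * B' + A' * B) ^+ 2 + (A * B - A' * B') ^+ 2 = 1.
  transitivity ((A ^+ 2 + A' ^+ 2) * (B ^+ 2 + B' ^+ 2)); first ring.
  by rewrite hA hB mulr1.
have h3 : (A ^+ 2 - B ^+ 2) ^+ 2 <= (A * B' - A' * B) ^+ 2.
  rewrite eA exprMn; apply: ler_piMr; first exact: sqr_ge0.
  have := sqr_ge0 (A * B - A' * B'); lra.
have h4 : al ^+ 2 <= (A * B + A' * B') ^+ 2.
  rewrite !expr2; apply: ler_pM => //.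
lra.
Qed.

Section PL.
Variable C : numClosedFieldType.

Lemma mxBE m n (A B : 'M[C]_(m, n)) i j : (A - B) i j = A i j - B i j.
Proof. by rewrite !mxE. Qed.
Lemma mxDE m n (A B : 'M[C]_(m, n)) i j : (A + B) i j = A i j + B i j.
Proof. by rewrite !mxE. Qed.
Lemma mxZE m n (c : C) (A : 'M[C]_(m, n)) i j : (c *: A) i j = c * A i j.
Proof. by rewrite !mxE. Qed.

Lemma cs n (u v : 'rV[C]_n) :
  `|(u *m v^t*) 0 0| <= sqrtC ((u *m u^t*) 0 0) * sqrtC ((v *m v^t*) 0 0).
Proof.
rewrite -!dotmxE.
have := CauchySchwarz_sqrt (dotmx (n:=n)) u v.
by case.
Qed.

Lemma nrm_ge0 n (u : 'rV[C]_n) : 0 <= (u *m u^t*) 0 0.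
Proof. by rewrite row_norm sumr_ge0 // => i _; rewrite exprn_ge0. Qed.

Lemma PL n (psi phi : 'rV[C]_n) (Pi : 'M[C]_n) :
  (psi *m psi^t*) 0 0 = 1 -> (phi *m phi^t*) 0 0 = 1 ->
  Pi^t* = Pi -> Pi *m Pi = Pi ->
  0 <= 1 - `|(psi *m phi^t*) 0 0| ^+ 2 /\
  (psi *m Pi *m psi^t*) 0 0 - (phi *m Pi *m phi^t*) 0 0
    <= sqrtC (1 - `|(psi *m phi^t*) 0 0| ^+ 2).
Proof.
move=> hpsi hphi hP hPP.
set Q := 1%:M - Pi.
have hQ : Q^t* = Q by rewrite /Q linearB /= map_mxB /= trmx1 map_mx1 hP.
have hQQ : Q *m Q = Q.
  by rewrite /Q mulmxBl !mulmxBr !mul1mx !mulmx1 hPP subrr subr0.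
have key : forall (X : 'M[C]_n) (u w : 'rV[C]_n), X^t* = X -> X *m X = X ->
    ((u *m X) *m (w *m X)^t*) 0 0 = (u *m X *m w^t*) 0 0.
  move=> X u w h1 h2; rewrite tsM h1 !mulmxA; congr (_ 0 0); congr (_ *m _).
  by rewrite -mulmxA h2.
set s := (psi *m Pi *m psi^t*) 0 0.
set t := (phi *m Pi *m phi^t*) 0 0.
have hs : ((psi *m Pi) *m (psi *m Pi)^t*) 0 0 = s by rewrite key.
have ht : ((phi *m Pi) *m (phi *m Pi)^t*) 0 0 = t by rewrite key.
have hs' : ((psi *m Q) *m (psi *m Q)^t*) 0 0 = 1 - s.
  by rewrite key // /Q mulmxBr mulmx1 mulmxBl mxBE hpsi.
have ht' : ((phi *m Q) *m (phi *m Q)^t*) 0 0 = 1 - t.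
  by rewrite key // /Q mulmxBr mulmx1 mulmxBl mxBE hphi.
have hsplit : (psi *m phi^t*) 0 0 =
   ((psi *m Pi) *m (phi *m Pi)^t*) 0 0 + ((psi *m Q) *m (phi *m Q)^t*) 0 0.
  rewrite !key // /Q mulmxBr mulmx1 mulmxBl mxBE.
  by rewrite addrC subrK.
have s0 : 0 <= s by rewrite -hs nrm_ge0.
have t0 : 0 <= t by rewrite -ht nrm_ge0.
have s1 : 0 <= 1 - s by rewrite -hs' nrm_ge0.
have t1 : 0 <= 1 - t by rewrite -ht' nrm_ge0.
set al := `|(psi *m phi^t*) 0 0|.
have hal : al <= sqrtC s * sqrtC t + sqrtC (1 - s) * sqrtC (1 - t).
  rewrite /al hsplit; apply: le_trans (ler_normD _ _) _.
  apply: lerD; first by rewrite -hs -ht cs.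
  by rewrite -hs' -ht' cs.
have hA0 : 0 <= sqrtC s by rewrite sqrtC_ge0.
have hA'0 : 0 <= sqrtC (1 - s) by rewrite sqrtC_ge0.
have hB0 : 0 <= sqrtC t by rewrite sqrtC_ge0.
have hB'0 : 0 <= sqrtC (1 - t) by rewrite sqrtC_ge0.
have hal0 : 0 <= al by rewrite /al normr_ge0.
pose mk := fun (z : C) (h : 0 <= z) => mkRc (ger0_real h).
have H2 : mk _ hA0 ^+ 2 + mk _ hA'0 ^+ 2 = 1.
  by apply: val_inj; rewrite rmorphD !rmorphXn rmorph1 /= !sqrtCK subrKC.
have H3 : mk _ hB0 ^+ 2 + mk _ hB'0 ^+ 2 = 1.
  by apply: val_inj; rewrite rmorphD !rmorphXn rmorph1 /= !sqrtCK subrKC.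
have H4 : mk _ hal0 <= mk _ hA0 * mk _ hB0 + mk _ hA'0 * mk _ hB'0.
  by rewrite -val_le rmorphD !rmorphM /=.
have H1 : 0 <= mk _ hal0 by rewrite -val_le.
have := @PLreal (Rc C) _ _ _ _ _ H1 H2 H3 H4.
rewrite -val_le !(rmorphXn, rmorphB, rmorph1) /= !sqrtCK => h.
have r0 : 0 <= 1 - al ^+ 2.
  apply: le_trans h; rewrite -(@real_normK _ (s - t)) ?exprn_ge0 //.
  by rewrite rpredB // ger0_real.
split => //.
have hr : s - t \is Num.real by rewrite rpredB // ger0_real.
case/orP: (real_leVge hr (real0 _)) => hst.
  by apply: le_trans hst _; rewrite sqrtC_ge0.
rewrite -(sqrCK hst) ler_sqrtC // nnegrE exprn_ge0 //.
Qed.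


End PL.


Section UB.
Variable C : numClosedFieldType.

Lemma tr_conj n (W A : 'M[C]_n) : W \is unitarymx -> \tr (W^t* *m A *m W) = \tr A.
Proof. by move=> Wu; rewrite mxtrace_mulC mulmxA unitary_mulK // mul1mx. Qed.

Lemma entry_row m n (A : 'M[C]_(m, n)) (M : 'M[C]_n) i j :
  (A *m M *m A^t*) i j = (row i A *m M *m (row j A)^t*) 0 0.
Proof.
rewrite !mxE; apply: eq_bigr => k _; rewrite !mxE; congr (_ * _).
by apply: eq_bigr => l _; rewrite !mxE.
Qed.

Lemma tr_rho n (R : 'M[C]_n) (p : 'rV[C]_n) (M : 'M[C]_n) :
  \tr (R^t* *m diag_mx p *m R *m M) = \sum_i p 0 i * (row i R *m M *m (row i R)^t*) 0 0.
Proof.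
rewrite -!mulmxA mxtrace_mulC -!mulmxA mul_diag_mx /mxtrace.
by apply: eq_bigr => i _; rewrite mxE -entry_row !mulmxA.
Qed.

Lemma tsB m n (A B : 'M[C]_(m, n)) : (A - B)^t* = A^t* - B^t*.
Proof. by apply/matrixP => i j; rewrite !mxE rmorphB. Qed.

Lemma unit_row n (R : 'M[C]_n) i : R \is unitarymx -> (row i R *m (row i R)^t*) 0 0 = 1.
Proof.
move=> Ru; have := entry_row R 1%:M i i; rewrite !mulmx1 unitary_mulK // => <-.
by rewrite mxE eqxx.
Qed.

Lemma UB n (V rho : 'M[C]_n) (mu c : C) :
  V \is unitarymx -> is_state rho ->
  (forall psi : 'rV[C]_n, (psi *m psi^t*) 0 0 = 1 -> mu <= `|(psi *m V *m psi^t*) 0 0| ^+ 2) ->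
  trnorm (c *: (rho - V *m rho *m V^t*)) <= `|c| * (2 * sqrtC (1 - mu)).
Proof.
move=> Vu [hr psd tr1] hmu; rewrite /adj in hr psd.
set Y := rho - V *m rho *m V^t*.
have hY : Y^t* = Y by rewrite /Y tsB !tsM trmxCK hr !mulmxA.
have [W [y [Wu yr eY]]] := herm_spec hY.
rewrite (trnorm_herm c Wu yr eY); apply: ler_wpM2l; first exact: normr_ge0.
have trV : \tr (V *m rho *m V^t*) = \tr rho.
  by rewrite mxtrace_mulC mulmxA unitary_mulKV // mul1mx.
have sy : \sum_i y 0 i = 0.
  have : \tr Y = 0 by rewrite /Y linearB /= trV subrr.
  by rewrite eY tr_conj // mxtrace_diag.
pose b := \row_i (if 0 < y 0 i then 1 else 0 : C).
pose Pi := W^t* *m diag_mx b *m W.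
have hPi : Pi^t* = Pi.
  rewrite /Pi !tsM trmxCK mulmxA tr_diag_mx map_diag_mx; congr (_ *m _ *m _).
  congr diag_mx; apply/rowP => i; rewrite !mxE; by case: ifP; rewrite ?rmorph1 ?rmorph0.
have hPP : Pi *m Pi = Pi.
  rewrite /Pi conj_mul // mulmx_diag; congr (_ *m _ *m _); congr diag_mx.
  by apply/rowP => i; rewrite !mxE; case: ifP; rewrite ?mulr1 ?mulr0.
have abs : \sum_i `|y 0 i| = 2 * \tr (Y *m Pi).
  rewrite eY /Pi conj_mul // tr_conj // mulmx_diag mxtrace_diag.
  transitivity (\sum_i (2 * (y 0 i * b 0 i) - y 0 i)).
    apply: eq_bigr => i _; rewrite mxE.
    case: ifP => hy.
      by rewrite mulr1 gtr0_norm // mulr2n mulrDl mul1r addrK.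
    rewrite mulr0 mulr0 sub0r ler0_norm //.
    by move: hy; rewrite (real_ltNge (real0 _) (yr i)) => /negbFE.
  by rewrite sumrB sy subr0 mulr_sumr; apply: eq_bigr => i _; rewrite !mxE.
have [R [p [Ru pr erho]]] := herm_spec hr.
have p0 : forall i, 0 <= p 0 i.
  move=> i; have : (R *m rho *m R^t*) i i = p 0 i.
    rewrite erho !mulmxA unitary_mulK // mul1mx -mulmxA unitary_mulK // mulmx1.
    by rewrite mxE eqxx mulr1n.
  by rewrite entry_row => <-; apply: psd.
have sp : \sum_i p 0 i = 1.
  by rewrite -tr1 erho tr_conj // mxtrace_diag.
have e2 : \tr (V *m rho *m V^t* *m Pi) = \tr (rho *m (V^t* *m Pi *m V)).
  by rewrite -!mulmxA mxtrace_mulC !mulmxA.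
rewrite abs /Y mulmxBl linearB /= e2 {1 2}erho !tr_rho -sumrB.
rewrite ler_pM2l ?ltr0n //.
apply: (@le_trans _ _ (\sum_i p 0 i * sqrtC (1 - mu))); last first.
  by rewrite -mulr_suml sp mul1r.
apply: ler_sum => i _; rewrite -mulrBr; apply: ler_wpM2l; first exact: p0.
set psi := row i R.
have hpsi : (psi *m psi^t*) 0 0 = 1 by apply: unit_row.
set phi := psi *m V^t*.
have hphi : (phi *m phi^t*) 0 0 = 1.
  by rewrite /phi tsM trmxCK mulmxA -[psi *m V^t* *m V]mulmxA unitary_mulKV // mulmx1.
have [h0 hle] := PL hpsi hphi hPi hPP.
have -> : (psi *m (V^t* *m Pi *m V) *m psi^t*) 0 0 = (phi *m Pi *m phi^t*) 0 0.
  by rewrite /phi tsM trmxCK !mulmxA.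
apply: le_trans hle _.
have ea : (psi *m phi^t*) 0 0 = (psi *m V *m psi^t*) 0 0.
  by rewrite /phi tsM trmxCK mulmxA.
rewrite ea in h0 *.
have hm := hmu psi hpsi.
rewrite ler_sqrtC ?nnegrE //; first by rewrite lerD2l lerN2.
by apply: le_trans h0 _; rewrite lerD2l lerN2.
Qed.

End UB.


Section LB.
Variable C : numClosedFieldType.

Definition E n (u v : 'rV[C]_n) : 'M[C]_n := u^t* *m v.

Lemma r1mul n (u v w z : 'rV[C]_n) : E u v *m E w z = (v *m w^t*) 0 0 *: E u z.
Proof.
rewrite /E mulmxA -[u^t* *m v *m w^t*]mulmxA {1}[v *m w^t*]mx11_scalar.
by rewrite mul_mx_scalar -scalemxAl.
Qed.

Lemma r1mulZ n (k : C) (u v w z : 'rV[C]_n) :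
  (k *: E u v) *m E w z = (k * (v *m w^t*) 0 0) *: E u z.
Proof. by rewrite -scalemxAl r1mul scalerA. Qed.

Lemma E_entry n (u v : 'rV[C]_n) i j : E u v i j = (u 0 i)^* * v 0 j.
Proof. by rewrite /E !mxE big_ord1 !mxE. Qed.

Lemma trE n (u v : 'rV[C]_n) : \tr (E u v) = (v *m u^t*) 0 0.
Proof. by rewrite /E mxtrace_mulC trace_mx11. Qed.

Lemma rho0_state n (psi : 'rV[C]_n) : (psi *m psi^t*) 0 0 = 1 -> is_state (E psi psi).
Proof.
move=> h; split.
- by rewrite /adj /E tsM trmxCK.
- move=> v; rewrite /adj.
  have -> : v *m E psi psi *m v^t* = (v *m psi^t*) *m (v *m psi^t*)^t*.
    by rewrite /E tsM trmxCK !mulmxA.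
  by rewrite row_norm sumr_ge0 // => i _; rewrite exprn_ge0.
- by rewrite trE.
Qed.

Lemma ip_conj n (u v : 'rV[C]_n) : (u *m v^t*) 0 0 = ((v *m u^t*) 0 0)^*.
Proof.
rewrite !mxE rmorph_sum; apply: eq_bigr => k _; rewrite !mxE rmorphM /= conjCK mulrC.
by [].
Qed.

Lemma unconj n (W X : 'M[C]_n) : W \is unitarymx -> W *m (W^t* *m X *m W) *m W^t* = X.
Proof.
by move=> Wu; rewrite !mulmxA unitary_mulK // mul1mx -mulmxA unitary_mulK // mulmx1.
Qed.

Lemma LB n (U : 'M[C]_n) (psi : 'rV[C]_n) (c : C) : U \is unitarymx ->
  (psi *m psi^t*) 0 0 = 1 ->
  trnorm (c *: (E psi psi - U *m E psi psi *m U^t*)) =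
  `|c| * (2 * sqrtC (1 - `|(psi *m U *m psi^t*) 0 0| ^+ 2)).
Proof.
move=> Uu hpsi.
set phi := psi *m U^t*.
have hphi : (phi *m phi^t*) 0 0 = 1.
  by rewrite /phi tsM trmxCK mulmxA -[psi *m U^t* *m U]mulmxA unitary_mulKV // mulmx1.
have eQ : U *m E psi psi *m U^t* = E phi phi by rewrite /E /phi tsM trmxCK !mulmxA.
rewrite eQ.
have ea : (psi *m U *m psi^t*) 0 0 = (psi *m phi^t*) 0 0 by rewrite /phi tsM trmxCK mulmxA.
have eb : (phi *m psi^t*) 0 0 = ((psi *m phi^t*) 0 0)^*.
  exact: ip_conj.
rewrite ea normCK -eb.
set a := (psi *m phi^t*) 0 0; set b := (phi *m psi^t*) 0 0.
set Y := E psi psi - E phi phi.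
have hY : Y^t* = Y by rewrite /Y tsB /E !tsM !trmxCK.
have [W [y [Wu yr eY]]] := herm_spec hY.
rewrite (trnorm_herm c Wu yr eY); congr (_ * _).
set lam := 1 - a * b.
have Y3 : Y *m Y *m Y = lam *: Y.
  rewrite /Y !(mulmxBl, mulmxBr, r1mul, r1mulZ) hpsi hphi -/a -/b.
  by apply/matrixP => i j; rewrite !(mxBE, mxDE, mxZE, E_entry) /lam; ring.
have D3 : forall i, y 0 i ^+ 3 = lam * y 0 i.
  move=> i; have := congr1 (fun M => (W *m M *m W^t*) i i) Y3.
  rewrite /= eY !conj_mul // !unconj // -scalemxAr -scalemxAl unconj //.
  by rewrite !mulmx_diag mxZE !mxE eqxx !mulr1n => <-; ring.
have T2 : \sum_i y 0 i ^+ 2 = 2 * lam.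
  have : \tr (Y *m Y) = 2 * lam.
    rewrite /Y !mulmxBl !mulmxBr !r1mul hpsi hphi -/a -/b !linearB !linearZ /= !trE.
    by rewrite hpsi hphi -/a -/b /lam; ring.
  rewrite eY conj_mul // tr_conj // mulmx_diag mxtrace_diag => <-.
  by apply: eq_bigr => i _; rewrite mxE expr2.
have ab1 : a * b <= 1.
  rewrite /b eb -normCK; have := cs psi phi; rewrite hpsi hphi sqrtC1 mulr1 -/a => h.
  by rewrite -(expr1n _ 2) ler_pXn2r ?nnegrE.
have lam0 : 0 <= lam by rewrite /lam subr_ge0.
set sq := sqrtC lam.
have key : forall i, `|y 0 i| * sq = y 0 i ^+ 2.
  move=> i; have := D3 i; move/eqP; rewrite -subr_eq0.
  have -> : y 0 i ^+ 3 - lam * y 0 i = y 0 i * (y 0 i ^+ 2 - lam) by ring.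
  rewrite mulf_eq0 => /orP[/eqP->|]; first by rewrite normr0 mul0r expr0n.
  rewrite subr_eq0 => /eqP e.
  have hy : `|y 0 i| = sq by rewrite /sq -e -real_normK // sqrCK.
  by rewrite hy /sq -expr2 sqrtCK e.
have S : (\sum_i `|y 0 i|) * sq = 2 * sq * sq.
  rewrite mulr_suml (eq_bigr _ (fun i _ => key i)) T2 /sq -mulrA -expr2 sqrtCK.
  by [].
case: (eqVneq sq 0) => sq0.
  have l0 : lam = 0 by apply/eqP; rewrite -sqrtC_eq0 -/sq sq0.
  rewrite sq0 mulr0 big1 // => i _; apply/eqP; rewrite normr_eq0.
  by have := key i; rewrite sq0 mulr0 => /esym/eqP; rewrite expf_eq0.
by apply: (mulIf sq0).
Qed.

End LB.


Section Tens.
Variable C : numClosedFieldType.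
Variables d d' : nat.

Lemma enc_dec (a : 'I_(d * d')) : enc (dec a).1 (dec a).2 = a.
Proof. by rewrite /enc /dec -surjective_pairing enum_valK cast_ordKV. Qed.

Lemma dec_enc i k : dec (enc i k : 'I_(d * d')) = (i, k).
Proof. by rewrite /enc /dec cast_ordK enum_rankK. Qed.

Lemma sum_pair (F : 'I_(d * d') -> C) : \sum_a F a = \sum_i \sum_k F (enc i k).
Proof.
rewrite pair_big /=.
rewrite (reindex (fun p : 'I_d * 'I_d' => enc p.1 p.2)) /=.
  by apply: eq_bigr => -[i k].
exists (@dec d d') => [p _|a _]; first by rewrite dec_enc -surjective_pairing.
exact: enc_dec.
Qed.

Lemma mulE m n p (A : 'M[C]_(m, n)) (B : 'M[C]_(n, p)) i j :
  (A *m B) i j = \sum_k A i k * B k j.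
Proof. by rewrite mxE. Qed.

Lemma tsE m n (A : 'M[C]_(m, n)) i j : (A^t*) i j = (A j i)^*.
Proof. by rewrite !mxE. Qed.

Definition Vmx (U : 'M[C]_d) : 'M[C]_(d * d') :=
  \matrix_(a, b) (U (dec a).1 (dec b).1 * ((dec a).2 == (dec b).2)%:R).

Lemma VE U a b : Vmx U a b = U (dec a).1 (dec b).1 * ((dec a).2 == (dec b).2)%:R.
Proof. by rewrite mxE. Qed.

Lemma sumV U a (F : 'I_(d * d') -> C) :
  \sum_e Vmx U a e * F e = \sum_q U (dec a).1 q * F (enc q (dec a).2).
Proof.
rewrite sum_pair; apply: eq_bigr => q _.
rewrite (bigD1 (dec a).2) //= big1 ?addr0; first by rewrite VE dec_enc eqxx mulr1.
by move=> k hk; rewrite VE dec_enc /= eq_sym (negPf hk) mulr0 mul0r.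
Qed.

Lemma sumVc U b (G : 'I_(d * d') -> C) :
  \sum_c G c * (Vmx U b c)^* = \sum_p G (enc p (dec b).2) * (U (dec b).1 p)^*.
Proof.
rewrite sum_pair; apply: eq_bigr => p _.
rewrite (bigD1 (dec b).2) //= big1 ?addr0; first by rewrite VE dec_enc eqxx mulr1.
by move=> k hk; rewrite VE dec_enc /= eq_sym (negPf hk) mulr0 rmorph0 mulr0.
Qed.

Lemma eq_dec (a b : 'I_(d * d')) :
  (a == b) = ((dec a).1 == (dec b).1) && ((dec a).2 == (dec b).2).
Proof.
apply/idP/idP => [/eqP->|/andP[/eqP h1 /eqP h2]]; first by rewrite !eqxx.
by rewrite -(enc_dec a) -(enc_dec b) h1 h2.
Qed.

Lemma V_unitary U : U \is unitarymx -> Vmx U \is unitarymx.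
Proof.
move=> Uu; apply/unitarymxP; apply/matrixP => a b.
rewrite mulE (eq_bigr (fun c => Vmx U a c * (Vmx U b c)^*)); last by move=> c _; rewrite tsE.
rewrite sumV.
under eq_bigr => q _ do rewrite VE dec_enc /= rmorphM mulrA.
rewrite -mulr_suml.
have := unitary_mulK Uu => /matrixP /(_ (dec a).1 (dec b).1).
rewrite mulE (eq_bigr (fun q => U (dec a).1 q * (U (dec b).1 q)^*)); last by move=> q _; rewrite tsE.
move=> ->; rewrite !mxE.
rewrite eq_dec [(dec b).2 == _]eq_sym.
by case: (_ == _); case: (_ == _); rewrite /= ?mulr1n ?mulr0n ?rmorph1 ?rmorph0 ?mulr1 ?mulr0.
Qed.

Lemma tens_J U r (X : 'M[C]_(d * d')) :
  tens_id (Jch U r) X = r *: X + (1 - r) *: (Vmx U *m X *m (Vmx U)^t*).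
Proof.
apply/matrixP => a b.
rewrite /tens_id mxE /Jch /adj mxDE mxZE [in RHS]mxDE !mxZE; congr (_ + _ * _).
  by rewrite mxE !enc_dec.
transitivity (\sum_p (\sum_q U (dec a).1 q * X (enc q (dec a).2) (enc p (dec b).2))
                       * (U (dec b).1 p)^*).
  rewrite mulE; apply: eq_bigr => p _; rewrite mulE tsE; congr (_ * _).
  by apply: eq_bigr => q _; rewrite mxE.
rewrite mulE (eq_bigr (fun c => (Vmx U *m X) a c * (Vmx U b c)^*)); last first.
  by move=> c _; rewrite tsE.
by rewrite sumVc; apply: eq_bigr => p _; rewrite mulE sumV.
Qed.

Definition psik (Psi : 'rV[C]_(d * d')) (k : 'I_d') : 'rV[C]_d := \row_i Psi 0 (enc i k).

Lemma V_quad U (Psi : 'rV[C]_(d * d')) :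
  (Psi *m Vmx U *m Psi^t*) 0 0 = \sum_k (psik Psi k *m U *m (psik Psi k)^t*) 0 0.
Proof.
rewrite mulE (eq_bigr (fun b => (Psi *m Vmx U) 0 b * (Psi 0 b)^*)); last first.
  by move=> b _; rewrite tsE.
rewrite sum_pair exchange_big /=; apply: eq_bigr => k _.
rewrite mulE; apply: eq_bigr => j _; rewrite tsE; congr (_ * _); last by rewrite mxE.
rewrite !mulE sum_pair exchange_big /= (bigD1 k) //= [X in _ + X]big1 ?addr0.
  by apply: eq_bigr => i _; rewrite VE !dec_enc /= eqxx mulr1 !mxE.
move=> l lk; apply: big1 => i _; by rewrite VE !dec_enc /= (negPf lk) !mulr0.
Qed.

Lemma psik_norm (Psi : 'rV[C]_(d * d')) :
  \sum_k (psik Psi k *m (psik Psi k)^t*) 0 0 = (Psi *m Psi^t*) 0 0.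
Proof.
rewrite [in RHS]mulE sum_pair exchange_big /=; apply: eq_bigr => k _.
by rewrite mulE; apply: eq_bigr => i _; rewrite !tsE !mxE.
Qed.

End Tens.


Lemma Jdiff (C : numClosedFieldType) n (X M : 'M[C]_n) (r1 r2 : C) :
  (r1 *: X + (1 - r1) *: M) - (r2 *: X + (1 - r2) *: M) = (r1 - r2) *: (X - M).
Proof.
apply/matrixP => i j; rewrite !(mxBE, mxDE, mxZE); ring.
Qed.

Theorem theorem4 (C : numClosedFieldType) (d : nat) (U : 'M[C]_d) (r1 r2 : C) :
  (2 <= d)%N -> U \is unitarymx ->
  0 <= r1 <= 1 -> 0 <= r2 <= 1 ->
  exists rho0 : 'M[C]_d,
    [/\ is_state rho0,
        (forall rho : 'M[C]_d, is_state rho ->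
           psucc_single (Jch U r1) (Jch U r2) rho
             <= psucc_single (Jch U r1) (Jch U r2) rho0)
      & (forall (d' : nat) (rhoAB : 'M[C]_(d * d')), is_state rhoAB ->
           psucc_ent (Jch U r1) (Jch U r2) rhoAB
             <= psucc_single (Jch U r1) (Jch U r2) rho0)].
Proof.
move=> d2 Uu _ _.
have d0 : (0 < d)%N by apply: leq_trans d2.
have [psi0 [h0 hmin]] := realize d0 Uu.
set mu := `|(psi0 *m U *m psi0^t*) 0 0| ^+ 2.
have val0 : psucc_single (Jch U r1) (Jch U r2) (E psi0 psi0)
   = 2^-1 + 4^-1 * (`|r1 - r2| * (2 * sqrtC (1 - mu))).
  by rewrite /psucc_single /Jch /adj Jdiff LB.
exists (E psi0 psi0); split.
- exact: rho0_state.
- move=> rho hrho; rewrite val0 /psucc_single lerD2l ler_pM2l ?invr_gt0 ?ltr0n //.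
  rewrite /Jch /adj Jdiff; apply: UB => // psi hpsi.
  have := hmin 'I_1 (fun _ => psi); rewrite !big_ord1; apply; exact: hpsi.
- move=> d' rhoAB hrho; rewrite val0 /psucc_ent lerD2l ler_pM2l ?invr_gt0 ?ltr0n //.
  rewrite !tens_J Jdiff; apply: UB => //; first exact: V_unitary.
  move=> Psi hPsi; rewrite V_quad; apply: hmin.
  by rewrite psik_norm.
Qed.
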